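(* For any graph $\Gamma$, the polygraph monoid $P(\Gamma)=IH^0(M(\Gamma))$ is strongly $F^*$-inverse.
   Context: A graph $\Gamma=(V,E)$ has vertex set $V$ and irreflexive symmetric edge relation $E$. The graph monoid $M(\Gamma)$ is the monoid presented by $\langle x_v\ (v\in V)\mid x_ux_v=x_vx_u \text{ for } (u,v)\in E\rangle$. For a right cancellative monoid $D$ and $a\in D$, $\rho_a:D\to D$, $x\mapsto xa$, is regarded as a partial bijection of $D$; the inverse hull $IH(D)$ is the inverse submonoid of the symmetric inverse monoid on $D$ generated by all $\rho_a$, and $IH^0(D)=IH(D)\cup\{\emptyset\}$ (the empty map being a zero). In an inverse monoid, the natural partial order is $a\le b$ iff $a=eb$ for some idempotent $e$. An inverse monoid $S$ is $F^*$-inverse if every nonzero element (every element, if $S$ has no zero) lies beneath a unique maximal element in the natural partial order. $S$ is strongly $E^*$-unitary if there is a group $G$ and a function $\theta:S\to G^0$ ($G$ with a zero adjoined) such that $a\theta=0$ iff $a$ is the zero of $S$, $a\theta=1$ iff $a$ is a nonzero idempotent, and $(ab)\theta=(a\theta)(b\theta)$ whenever $ab$ is not zero. $S$ is strongly $F^*$-inverse if it is both $F^*$-inverse and strongly $E^*$-unitary. *)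

(* Defs.v *)
From Stdlib Require Import List Relations.
Import ListNotations.
Set Implicit Arguments.

Definition is_graph (V : Type) (E : V -> V -> Prop) : Prop :=
  (forall u, ~ E u u) /\ (forall u v, E u v -> E v u).

Inductive mstep (V : Type) (E : V -> V -> Prop) : list V -> list V -> Prop :=
| mstep_swap : forall (u w : list V) (a b : V),
    E a b -> mstep E (u ++ a :: b :: w) (u ++ b :: a :: w).

(** The congruence on the free monoid [list V] defining M(Gamma):
    equivalence closure of the one-step commutations in context. *)
Definition meq (V : Type) (E : V -> V -> Prop) : list V -> list V -> Prop :=
  clos_refl_sym_trans (list V) (mstep E).

(** Elements of M(Gamma) are congruence classes [mcls E w] (subsets of words);
    the ambient type of classes is [list V -> Prop], and the carrier of
    M(Gamma) is the set of those predicates of the form [mcls E w].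
    The product is [mcls E u * mcls E v = mcls E (u ++ v)]. *)
Definition mcls (V : Type) (E : V -> V -> Prop) (w : list V) : list V -> Prop :=
  meq E w.

Definition elt (V : Type) : Type := list V -> Prop.

(** Partial maps on M(Gamma), represented as relations (graphs of maps). *)
Definition prel (V : Type) : Type := elt V -> elt V -> Prop.

Definition rho (V : Type) (E : V -> V -> Prop) (v : list V) : prel V :=
  fun x y => exists u, x = mcls E u /\ y = mcls E (u ++ v).

Definition idM (V : Type) (E : V -> V -> Prop) : prel V :=
  fun x y => x = y /\ exists u, x = mcls E u.

(** Composition of partial maps, maps written on the right:
    x (f g) = (x f) g. *)
Definition pcomp (V : Type) (f g : prel V) : prel V :=
  fun x z => exists y, f x y /\ g y z.

Definition pinv (V : Type) (f : prel V) : prel V := fun x y => f y x.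

Definition pempty (V : Type) : prel V := fun _ _ => False.

Inductive IH (V : Type) (E : V -> V -> Prop) : prel V -> Prop :=
| IH_one : IH E (idM E)
| IH_rho : forall v, IH E (rho E v)
| IH_comp : forall f g, IH E f -> IH E g -> IH E (pcomp f g)
| IH_inv : forall f, IH E f -> IH E (pinv f).

Definition P0 (V : Type) (E : V -> V -> Prop) (f : prel V) : Prop :=
  IH E f \/ f = @pempty V.

Definition P_idem (V : Type) (E : V -> V -> Prop) (e : prel V) : Prop :=
  P0 E e /\ pcomp e e = e.

Definition P_le (V : Type) (E : V -> V -> Prop) (a b : prel V) : Prop :=
  exists e, P_idem E e /\ a = pcomp e b.

Definition P_maximal (V : Type) (E : V -> V -> Prop) (m : prel V) : Prop :=
  P0 E m /\ forall b, P0 E b -> P_le E m b -> b = m.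

Definition P_Fstar (V : Type) (E : V -> V -> Prop) : Prop :=
  forall a, P0 E a -> a <> @pempty V ->
    exists! m, P_maximal E m /\ P_le E a m.

Record group : Type := Group {
  gcar :> Type;
  gmul : gcar -> gcar -> gcar;
  gone : gcar;
  ginv : gcar -> gcar;
  gmulA : forall x y z, gmul x (gmul y z) = gmul (gmul x y) z;
  gmul1 : forall x, gmul gone x = x;
  gmulV : forall x, gmul (ginv x) x = gone
}.

(** G^0 = G with a zero adjoined: [None] is the zero. *)
Definition omul (G : group) (x y : option G) : option G :=
  match x, y with
  | Some a, Some b => Some (gmul G a b)
  | _, _ => None
  end.

Definition P_strongly_Estar_unitary (V : Type) (E : V -> V -> Prop) : Prop :=
  exists (G : group) (theta : prel V -> option G),
    (forall a, P0 E a -> (theta a = None <-> a = @pempty V)) /\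
    (forall a, P0 E a -> (theta a = Some (gone G) <-> (a <> @pempty V /\ P_idem E a))) /\
    (forall a b, P0 E a -> P0 E b -> pcomp a b <> @pempty V ->
       theta (pcomp a b) = @omul G (theta a) (theta b)).

Definition P_strongly_Fstar (V : Type) (E : V -> V -> Prop) : Prop :=
  P_Fstar E /\ P_strongly_Estar_unitary E.

(* Main.v *)
Require Import Defs.
From Stdlib Require Import List Relations Lia ZArith.
From Stdlib Require Import Classical ClassicalEpsilon FunctionalExtensionality PropExtensionality ProofIrrelevance.
Import ListNotations.

Definition dec (P : Prop) : bool := if excluded_middle_informative P then true else false.
Lemma decT (P : Prop) : P -> dec P = true.
Proof. unfold dec; destruct (excluded_middle_informative P); tauto. Qed.
Lemma decF (P : Prop) : ~ P -> dec P = false.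
Proof. unfold dec; destruct (excluded_middle_informative P); tauto. Qed.
Lemma decP (P : Prop) : dec P = true -> P.
Proof. unfold dec; destruct (excluded_middle_informative P); congruence. Qed.
Lemma decN (P : Prop) : dec P = false -> ~ P.
Proof. unfold dec; destruct (excluded_middle_informative P); congruence. Qed.

Lemma meq_refl {V} (E : V -> V -> Prop) u : meq E u u.
Proof. apply rst_refl. Qed.
Lemma meq_sym {V} (E : V -> V -> Prop) u v : meq E u v -> meq E v u.
Proof. apply rst_sym. Qed.
Lemma meq_trans {V} (E : V -> V -> Prop) u v w : meq E u v -> meq E v w -> meq E u w.
Proof. apply rst_trans. Qed.

Lemma meq_app_l {V} (E : V -> V -> Prop) w u v : meq E u v -> meq E (w ++ u) (w ++ v).
Proof.
  induction 1.
  - destruct H. apply rst_step. rewrite !app_assoc. constructor. auto.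
  - apply rst_refl.
  - apply rst_sym; auto.
  - eapply rst_trans; eauto.
Qed.
Lemma meq_app_r {V} (E : V -> V -> Prop) w u v : meq E u v -> meq E (u ++ w) (v ++ w).
Proof.
  induction 1.
  - destruct H. apply rst_step. rewrite <- !app_assoc. simpl. constructor. auto.
  - apply rst_refl.
  - apply rst_sym; auto.
  - eapply rst_trans; eauto.
Qed.
Lemma meq_app {V} (E : V -> V -> Prop) u u' v v' :
  meq E u u' -> meq E v v' -> meq E (u ++ v) (u' ++ v').
Proof. intros. eapply meq_trans. apply meq_app_r; eauto. apply meq_app_l; auto. Qed.
Lemma meq_cons {V} (E : V -> V -> Prop) x u v : meq E u v -> meq E (x :: u) (x :: v).
Proof. intro H. apply (meq_app_l E [x]) in H. exact H. Qed.

Lemma meq_length {V} (E : V -> V -> Prop) u v : meq E u v -> length u = length v.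
Proof.
  induction 1; auto; try congruence.
  destruct H. rewrite !length_app. simpl. lia.
Qed.

Lemma Lmove {V} (E : V -> V -> Prop) (HG : is_graph E) x w1 w2 :
  (forall y, In y w1 -> E x y) -> meq E (w1 ++ x :: w2) (x :: w1 ++ w2).
Proof.
  induction w1 as [|y w1 IH]; intros H; simpl.
  - apply meq_refl.
  - eapply meq_trans. apply meq_cons. apply IH. intros; apply H; simpl; auto.
    apply rst_step. apply (mstep_swap E [] (w1 ++ w2) y x).
    apply (proj2 HG). apply H. simpl; auto.
Qed.

Definition proj {V} (a b : V) (w : list V) : list V :=
  filter (fun c => dec (c = a \/ c = b)) w.

Definition PP {V} (E : V -> V -> Prop) (u v : list V) : Prop :=
  forall a b, ~ E a b -> proj a b u = proj a b v.

Lemma PP_easy {V} (E : V -> V -> Prop) (HG : is_graph E) u v : meq E u v -> PP E u v.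
Proof.
  induction 1; unfold PP in *; intros.
  - destruct H as [u w x y Hxy]. unfold proj. rewrite !filter_app. f_equal. simpl.
    destruct (dec (x = a \/ x = b)) eqn:Ha; destruct (dec (y = a \/ y = b)) eqn:Hb; auto.
    exfalso. apply decP in Ha. apply decP in Hb. apply H0.
    destruct HG as [Hirr Hsym].
    destruct Ha as [Ha|Ha]; destruct Hb as [Hb|Hb]; subst;
      first [ exact Hxy | apply Hsym; exact Hxy | exfalso; eapply Hirr; exact Hxy ].
  - auto.
  - symmetry; auto.
  - rewrite IHclos_refl_sym_trans1; auto.
Qed.

Lemma PP_trans {V} (E : V -> V -> Prop) u v w : PP E u v -> PP E v w -> PP E u w.
Proof. unfold PP; intros; rewrite H; auto. Qed.

Lemma first_split {V} (x : V) w : In x w -> exists w1 w2, w = w1 ++ x :: w2 /\ ~ In x w1.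
Proof.
  induction w as [|c w IH]; simpl; intros H. contradiction.
  destruct (classic (c = x)) as [->|Hc].
  - exists [], w. auto.
  - destruct H as [H|H]. congruence.
    destruct (IH H) as (w1 & w2 & -> & Hn). exists (c :: w1), w2. simpl. split; auto.
    intros [|]; auto.
Qed.

Lemma proj_head {V} (x c : V) v1 r :
  ~ In x v1 -> In c v1 -> exists t, proj x c (v1 ++ r) = c :: t.
Proof.
  induction v1 as [|y v1 IH]; simpl; intros Hx Hc. contradiction.
  unfold proj in *. simpl.
  destruct (classic (y = c)) as [->|Hy].
  - rewrite decT by auto. eauto.
  - destruct Hc as [Hc|Hc]. congruence.
    rewrite decF. apply IH; auto.
    intros [->| ->]; auto.
Qed.

Lemma first_split_PP {V} (E : V -> V -> Prop) (HG : is_graph E) x u v :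
  PP E (x :: u) v -> exists v1 v2, v = v1 ++ x :: v2 /\ ~ In x v1 /\ forall c, In c v1 -> E x c.
Proof.
  intros H.
  assert (Hin : In x v).
  { assert (Hx := H x x (proj1 HG x)). unfold proj in Hx. simpl in Hx.
    rewrite decT in Hx by auto.
    assert (In x (filter (fun c => dec (c = x \/ c = x)) v)) by (rewrite <- Hx; simpl; auto).
    apply filter_In in H0. tauto. }
  destruct (first_split x v Hin) as (v1 & v2 & -> & Hn).
  exists v1, v2. repeat split; auto.
  intros c Hc. apply NNPP. intros Hne.
  assert (Hxc := H x c Hne).
  destruct (proj_head x c v1 (x :: v2) Hn Hc) as [t Ht].
  rewrite Ht in Hxc. unfold proj in Hxc. simpl in Hxc. rewrite decT in Hxc by auto.
  inversion Hxc. subst. contradiction.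
Qed.

Lemma PP_cons {V} (E : V -> V -> Prop) x u v : PP E (x :: u) (x :: v) -> PP E u v.
Proof.
  unfold PP, proj; intros H a b Hab. specialize (H a b Hab). simpl in H.
  destruct (dec (x = a \/ x = b)); congruence.
Qed.

Lemma PP_hard {V} (E : V -> V -> Prop) (HG : is_graph E) :
  forall n u v, length u = n -> PP E u v -> meq E u v.
Proof.
  induction n; intros u v Hl H.
  - destruct u; [|discriminate]. destruct v as [|c v]. apply meq_refl.
    exfalso. assert (Hc := H c c (proj1 HG c)). unfold proj in Hc. simpl in Hc.
    rewrite decT in Hc by auto. discriminate.
  - destruct u as [|x u]; [discriminate|]. simpl in Hl.
    destruct (first_split_PP E HG x u v H) as (v1 & v2 & -> & Hn & Hc).
    assert (Hm := Lmove E HG x v1 v2 Hc).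
    assert (H2 : PP E u (v1 ++ v2)).
    { apply PP_cons with x. eapply PP_trans. apply H. apply PP_easy; auto. }
    assert (Hu : meq E u (v1 ++ v2)) by (apply (IHn u (v1 ++ v2)); [lia | exact H2]).
    eapply meq_trans. apply meq_cons. exact Hu.
    apply meq_sym. exact Hm.
Qed.

Lemma meq_PP {V} (E : V -> V -> Prop) (HG : is_graph E) u v : PP E u v -> meq E u v.
Proof. intros. eapply PP_hard; eauto. Qed.

Lemma cancel_l {V} (E : V -> V -> Prop) (HG : is_graph E) w u v :
  meq E (w ++ u) (w ++ v) -> meq E u v.
Proof.
  intros H. apply meq_PP; auto. apply PP_easy in H; auto. intros a b Hab.
  specialize (H a b Hab). unfold proj in *. rewrite !filter_app in H. eapply app_inv_head; eauto.
Qed.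
Lemma cancel_r {V} (E : V -> V -> Prop) (HG : is_graph E) w u v :
  meq E (u ++ w) (v ++ w) -> meq E u v.
Proof.
  intros H. apply meq_PP; auto. apply PP_easy in H; auto. intros a b Hab.
  specialize (H a b Hab). unfold proj in *. rewrite !filter_app in H. eapply app_inv_tail; eauto.
Qed.

Lemma proj_rev {V} (a b : V) w : proj a b (rev w) = rev (proj a b w).
Proof.
  induction w; simpl; auto. unfold proj in *. rewrite filter_app, IHw. simpl.
  destruct (dec (a0 = a \/ a0 = b)); simpl; auto. rewrite app_nil_r; auto.
Qed.

Lemma meq_rev {V} (E : V -> V -> Prop) (HG : is_graph E) u v : meq E u v -> meq E (rev u) (rev v).
Proof.
  intros H. apply PP_easy in H; auto. apply meq_PP; auto. intros a b Hab.
  rewrite !proj_rev. f_equal. auto.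
Qed.

Lemma L1 {V} (E : V -> V -> Prop) (HG : is_graph E) x w w' :
  meq E w (x :: w') -> exists w1 w2, w = w1 ++ x :: w2 /\ ~ In x w1 /\ forall c, In c w1 -> E x c.
Proof.
  intros H. apply first_split_PP with w'; auto. apply PP_easy; auto. apply meq_sym; auto.
Qed.

Definition pre {V} (E : V -> V -> Prop) (d a : list V) := exists c, meq E a (d ++ c).
Definition suf {V} (E : V -> V -> Prop) (b m : list V) := exists u, meq E m (u ++ b).

Lemma L2 {V} (E : V -> V -> Prop) (HG : is_graph E) x d c t :
  meq E (d ++ c) (x :: t) -> ~ pre E [x] d ->
  (forall y, In y d -> E x y) /\ exists c', meq E c (x :: c').
Proof.
  intros H Hn. destruct (L1 E HG x _ _ H) as (w1 & w2 & Heq & Hx & Hc).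
  apply app_eq_app in Heq. destruct Heq as [l [[-> Hl] | [-> Hl]]].
  - destruct l as [|z l].
    + simpl in Hl. subst c. rewrite app_nil_r. split; auto. exists w2; apply meq_refl.
    + simpl in Hl. inversion Hl; subst. exfalso. apply Hn. exists (w1 ++ l).
      simpl. apply (Lmove E HG z w1 l); auto.
  - split. intros y Hy; apply Hc; apply in_or_app; auto.
    subst c. exists (l ++ w2). apply (Lmove E HG x l w2). intros; apply Hc; apply in_or_app; auto.
Qed.

Lemma gcd_ex {V} (E : V -> V -> Prop) (HG : is_graph E) :
  forall n a b, length a < n -> exists g, pre E g a /\ pre E g b /\
    forall d, pre E d a -> pre E d b -> pre E d g.
Proof.
  induction n; intros a b Hl. lia.
  destruct (classic (exists x, pre E [x] a /\ pre E [x] b)) as [[x [[a' Ha] [b' Hb]]]|Hno].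
  - simpl in Ha, Hb.
    assert (Hla : length a' < n) by (apply meq_length in Ha; simpl in Ha; lia).
    destruct (IHn a' b' Hla) as (g' & [e1 He1] & [e2 He2] & Hu).
    exists (x :: g'). split; [|split].
    + exists e1. eapply meq_trans. exact Ha. apply meq_cons. exact He1.
    + exists e2. eapply meq_trans. exact Hb. apply meq_cons. exact He2.
    + intros d [c1 Hc1] [c2 Hc2].
      destruct (classic (pre E [x] d)) as [[d' Hd]|Hnd].
      * simpl in Hd.
        assert (Hd1 : pre E d' a').
        { exists c1. apply (cancel_l E HG [x]). simpl.
          eapply meq_trans. apply meq_sym, Ha. eapply meq_trans. exact Hc1.
          apply (meq_app_r E c1 d (x :: d')) in Hd. exact Hd. }
        assert (Hd2 : pre E d' b').
        { exists c2. apply (cancel_l E HG [x]). simpl.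
          eapply meq_trans. apply meq_sym, Hb. eapply meq_trans. exact Hc2.
          apply (meq_app_r E c2 d (x :: d')) in Hd. exact Hd. }
        destruct (Hu d' Hd1 Hd2) as [e He]. exists e.
        eapply meq_trans. apply meq_cons. exact He.
        apply meq_sym. apply (meq_app_r E e d (x :: d')) in Hd. exact Hd.
      * assert (Ha2 : meq E (d ++ c1) (x :: a')) by (eapply meq_trans; [apply meq_sym, Hc1| exact Ha]).
        assert (Hb2 : meq E (d ++ c2) (x :: b')) by (eapply meq_trans; [apply meq_sym, Hc2| exact Hb]).
        destruct (L2 E HG x d c1 a' Ha2 Hnd) as [Hcom [c1' Hc1']].
        destruct (L2 E HG x d c2 b' Hb2 Hnd) as [_ [c2' Hc2']].
        assert (Hd1 : pre E d a').
        { exists c1'. apply (cancel_l E HG [x]). simpl.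
          eapply meq_trans. apply meq_sym, Ha2. eapply meq_trans. apply meq_app_l. exact Hc1'.
          apply Lmove; auto. }
        assert (Hd2 : pre E d b').
        { exists c2'. apply (cancel_l E HG [x]). simpl.
          eapply meq_trans. apply meq_sym, Hb2. eapply meq_trans. apply meq_app_l. exact Hc2'.
          apply Lmove; auto. }
        destruct (Hu d Hd1 Hd2) as [e He]. exists (x :: e).
        eapply meq_trans. apply meq_cons. exact He.
        apply meq_sym. apply Lmove; auto.
  - exists []. split; [|split].
    + exists a. apply meq_refl.
    + exists b. apply meq_refl.
    + intros d [c1 Hc1] [c2 Hc2]. destruct d as [|y d].
      * exists []. apply meq_refl.
      * exfalso. apply Hno. exists y. split.
        -- exists (d ++ c1). exact Hc1.
        -- exists (d ++ c2). exact Hc2.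
Qed.

Lemma gcd_pre {V} (E : V -> V -> Prop) (HG : is_graph E) a b :
  exists g, pre E g a /\ pre E g b /\ forall d, pre E d a -> pre E d b -> pre E d g.
Proof. apply (gcd_ex E HG (S (length a))). lia. Qed.

Lemma suf_pre {V} (E : V -> V -> Prop) (HG : is_graph E) b m :
  suf E b m <-> pre E (rev b) (rev m).
Proof.
  split.
  - intros [u H]. exists (rev u). apply meq_rev in H; auto. rewrite rev_app_distr in H. exact H.
  - intros [c H]. exists (rev c). apply meq_rev in H; auto.
    rewrite rev_app_distr, !rev_involutive in H. exact H.
Qed.

Lemma gcd_suf {V} (E : V -> V -> Prop) (HG : is_graph E) a b :
  exists g, suf E g a /\ suf E g b /\ forall d, suf E d a -> suf E d b -> suf E d g.
Proof.
  destruct (gcd_pre E HG (rev a) (rev b)) as (g & H1 & H2 & H3).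
  exists (rev g). rewrite !suf_pre by auto. rewrite rev_involutive.
  split; [|split]; auto. intros d Hd1 Hd2. rewrite suf_pre in * by auto.
  rewrite rev_involutive. auto.
Qed.

Lemma suf_trans {V} (E : V -> V -> Prop) a b c : suf E a b -> suf E b c -> suf E a c.
Proof.
  intros [u Hu] [w Hw]. exists (w ++ u). rewrite <- app_assoc.
  eapply meq_trans. exact Hw. apply meq_app_l. exact Hu.
Qed.

Definition CM {V} (E : V -> V -> Prop) b c m := suf E b m /\ suf E c m.

Lemma lcm_ex_n {V} (E : V -> V -> Prop) (HG : is_graph E) b c :
  forall n m, length m < n -> CM E b c m ->
  exists m0, CM E b c m0 /\ forall m', CM E b c m' -> suf E m0 m'.
Proof.
  induction n; intros m Hl Hm. lia.
  destruct (classic (forall m', CM E b c m' -> suf E m m')) as [Hall|Hno].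
  - exists m. auto.
  - apply not_all_ex_not in Hno. destruct Hno as [m' Hm'].
    apply imply_to_and in Hm'. destruct Hm' as [Hcm' Hns].
    destruct (gcd_suf E HG m m') as (g & [u Hg1] & Hg2 & Hg3).
    assert (Hcg : CM E b c g).
    { destruct Hm, Hcm'. split; apply Hg3; auto. }
    destruct u as [|z u].
    + exfalso. apply Hns. simpl in Hg1. destruct Hg2 as [w Hw]. exists w.
      eapply meq_trans. exact Hw. apply meq_app_l. apply meq_sym. exact Hg1.
    + apply (IHn g); auto. apply meq_length in Hg1. rewrite length_app in Hg1. simpl in Hg1. lia.
Qed.

Lemma lcm_ex {V} (E : V -> V -> Prop) (HG : is_graph E) b c u u' :
  meq E (u ++ b) (u' ++ c) ->
  exists b' c', meq E (b' ++ b) (c' ++ c) /\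
    forall u u', meq E (u ++ b) (u' ++ c) -> exists w, meq E u (w ++ b') /\ meq E u' (w ++ c').
Proof.
  intros H.
  assert (Hcm : CM E b c (u ++ b)).
  { split. exists u; apply meq_refl. exists u'; exact H. }
  destruct (lcm_ex_n E HG b c (S (length (u ++ b))) (u ++ b) (Nat.lt_succ_diag_r _) Hcm)
    as (m0 & [[b' Hb'] [c' Hc']] & Hmin).
  exists b', c'. split.
  - eapply meq_trans. apply meq_sym, Hb'. exact Hc'.
  - intros v v' Hv.
    assert (Hcv : CM E b c (v ++ b)) by (split; [exists v; apply meq_refl | exists v'; exact Hv]).
    destruct (Hmin _ Hcv) as [w Hw]. exists w. split.
    + apply (cancel_r E HG b). rewrite <- app_assoc.
      eapply meq_trans. exact Hw. apply meq_app_l. exact Hb'.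
    + apply (cancel_r E HG c). rewrite <- app_assoc.
      eapply meq_trans. apply meq_sym, Hv. eapply meq_trans. exact Hw. apply meq_app_l. exact Hc'.
Qed.

Definition cfg (V : Type) := Z -> V -> bool.
Definition Xs (V : Type) := (V * V * cfg V)%type.

Record sym (V : Type) := Sym {
  fw : Xs V -> Xs V; bw : Xs V -> Xs V;
  fb : forall x, bw (fw x) = x; bf : forall x, fw (bw x) = x }.
Arguments fw {V}. Arguments bw {V}. Arguments fb {V}. Arguments bf {V}. Arguments Sym {V}.

Lemma sym_eq {V} (s t : sym V) : fw s = fw t -> s = t.
Proof.
  intros H.
  assert (Hb : bw s = bw t).
  { apply functional_extensionality. intros x.
    rewrite <- (bf t x) at 1. rewrite <- H. apply fb. }
  destruct s as [f1 b1 p1 q1], t as [f2 b2 p2 q2]. simpl in *. subst.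
  f_equal; apply proof_irrelevance.
Qed.

Definition smul {V} (s t : sym V) : sym V.
Proof.
  refine (Sym (fun x => fw s (fw t x)) (fun x => bw t (bw s x)) _ _).
  - intros x. rewrite fb, fb. auto.
  - intros x. rewrite bf, bf. auto.
Defined.
Definition sone {V} : sym V := Sym (fun x => x) (fun x => x) (fun x => eq_refl) (fun x => eq_refl).
Definition sinv {V} (s : sym V) : sym V := Sym (bw s) (fw s) (bf s) (fb s).

Definition SG (V : Type) : group.
Proof.
  refine (@Group (sym V) smul sone sinv _ _ _).
  - intros. apply sym_eq. reflexivity.
  - intros. apply sym_eq. reflexivity.
  - intros. apply sym_eq. simpl. apply functional_extensionality. intros; apply fb.
Defined.

Definition sh {V} (f : cfg V) : cfg V := fun n => f (n - 1)%Z.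
Definition unsh {V} (f : cfg V) : cfg V := fun n => f (n + 1)%Z.
Definition tog {V} (c : V) (f : cfg V) : cfg V :=
  fun n v => if (Z.eqb n 0 && dec (v = c))%bool then negb (f n v) else f n v.

Lemma tog_tog {V} (c : V) f : tog c (tog c f) = f.
Proof.
  unfold tog. apply functional_extensionality; intro n; apply functional_extensionality; intro v.
  destruct (Z.eqb n 0 && dec (v = c))%bool; auto. apply Bool.negb_involutive.
Qed.
Lemma sh_unsh {V} (f : cfg V) : sh (unsh f) = f.
Proof. unfold sh, unsh. apply functional_extensionality; intro n. f_equal. lia. Qed.
Lemma unsh_sh {V} (f : cfg V) : unsh (sh f) = f.
Proof. unfold sh, unsh. apply functional_extensionality; intro n. f_equal. lia. Qed.

Definition keep {V} (E : V -> V -> Prop) (a b c : V) : bool :=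
  (dec (~ E a b) && dec (c = a \/ c = b))%bool.

Definition sigma {V} (E : V -> V -> Prop) (c : V) : sym V.
Proof.
  refine (Sym (fun x => match x with (a, b, f) => (a, b, if keep E a b c then sh (tog c f) else f) end)
              (fun x => match x with (a, b, f) => (a, b, if keep E a b c then tog c (unsh f) else f) end) _ _).
  - intros [[a b] f]. destruct (keep E a b c); auto. rewrite unsh_sh, tog_tog. auto.
  - intros [[a b] f]. destruct (keep E a b c); auto. rewrite tog_tog, sh_unsh. auto.
Defined.

Definition hw {V} (E : V -> V -> Prop) (w : list V) : sym V :=
  fold_right (fun c s => smul (sigma E c) s) sone w.

Lemma hw_app {V} (E : V -> V -> Prop) u v : hw E (u ++ v) = smul (hw E u) (hw E v).
Proof.
  induction u; simpl. apply sym_eq; reflexivity.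
  rewrite IHu. apply sym_eq; reflexivity.
Qed.

Definition run {V} (l : list V) (f : cfg V) : cfg V := fold_right (fun c f => sh (tog c f)) f l.

Lemma fw_hw {V} (E : V -> V -> Prop) w a b f :
  fw (hw E w) (a, b, f) = (a, b, if dec (~ E a b) then run (proj a b w) f else f).
Proof.
  induction w as [|c w IH]; simpl.
  - destruct (dec (~ E a b)); auto.
  - rewrite IH. simpl. unfold keep, proj. simpl.
    destruct (dec (~ E a b)); simpl; auto.
    destruct (dec (c = a \/ c = b)); simpl; auto.
Qed.

Definition zcfg {V} : cfg V := fun _ _ => false.

Lemma run_neg {V} (l : list V) n v : (n <= 0)%Z -> run l zcfg n v = false.
Proof.
  revert n. induction l; intros n Hn; simpl. auto.
  unfold sh, tog. replace (Z.eqb (n - 1) 0) with false by (symmetry; apply Z.eqb_neq; lia).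
  simpl. apply IHl. lia.
Qed.

Lemma run_one {V} (c : V) l v : run (c :: l) zcfg 1%Z v = dec (v = c).
Proof.
  simpl. unfold sh, tog. simpl. rewrite run_neg by lia.
  destruct (dec (v = c)); auto.
Qed.

Lemma run_inj {V} (l1 l2 : list V) : run l1 zcfg = run l2 zcfg -> l1 = l2.
Proof.
  revert l2; induction l1 as [|c l1 IH]; intros [|d l2] H; auto.
  - exfalso. assert (H1 := f_equal (fun f => f 1%Z d) H). cbv beta in H1.
    rewrite run_one, decT in H1 by auto. unfold zcfg in H1; discriminate.
  - exfalso. assert (H1 := f_equal (fun f => f 1%Z c) H). cbv beta in H1.
    rewrite run_one, decT in H1 by auto. unfold zcfg in H1; discriminate.
  - assert (H1 := f_equal (fun f => f 1%Z c) H). cbv beta in H1.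
    rewrite !run_one, decT in H1 by auto. symmetry in H1. apply decP in H1. subst d.
    f_equal. apply IH. simpl in H.
    apply (f_equal unsh) in H. rewrite !unsh_sh in H.
    apply (f_equal (tog c)) in H. rewrite !tog_tog in H. exact H.
Qed.

Lemma hw_meq {V} (E : V -> V -> Prop) (HG : is_graph E) u v : meq E u v -> hw E u = hw E v.
Proof.
  intros H. apply PP_easy in H; auto. apply sym_eq. apply functional_extensionality.
  intros [[a b] f]. rewrite !fw_hw. destruct (dec (~ E a b)) eqn:He; auto.
  apply decP in He. rewrite H; auto.
Qed.

Lemma hw_inj {V} (E : V -> V -> Prop) (HG : is_graph E) u v : hw E u = hw E v -> meq E u v.
Proof.
  intros H. apply meq_PP; auto. intros a b Hab.
  assert (H1 := f_equal (fun s => fw s (a, b, zcfg)) H). cbv beta in H1.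
  rewrite !fw_hw, decT in H1 by auto. inversion H1. apply run_inj; auto.
Qed.

Lemma gmulV_r (G : group) (x : G) : gmul G x (ginv G x) = gone G.
Proof.
  set (y := ginv G x).
  assert (H1 : gmul G y (gmul G x y) = y).
  { rewrite gmulA. unfold y. rewrite gmulV. apply gmul1. }
  transitivity (gmul G (gmul G (ginv G y) y) (gmul G x y)).
  { rewrite gmulV. symmetry. apply gmul1. }
  rewrite <- gmulA. rewrite H1. apply gmulV.
Qed.
Lemma gmul1_r (G : group) (x : G) : gmul G x (gone G) = x.
Proof. rewrite <- (gmulV G x). rewrite gmulA. rewrite gmulV_r. apply gmul1. Qed.

Lemma g_pair (G : group) (p q r : G) :
  gmul G (ginv G (gmul G p q)) (gmul G p r) = gmul G (ginv G q) r.
Proof.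
  assert (gmul G (gmul G p q) (gmul G (ginv G q) r) = gmul G p r).
  { rewrite <- gmulA. f_equal. rewrite gmulA, gmulV_r. apply gmul1. }
  rewrite <- H. rewrite gmulA, gmulV. apply gmul1.
Qed.
Lemma g_mid (G : group) (x y z : G) :
  gmul G (ginv G x) z = gmul G (gmul G (ginv G x) y) (gmul G (ginv G y) z).
Proof. rewrite <- gmulA. f_equal. rewrite gmulA, gmulV_r, gmul1. auto. Qed.
Lemma g_one (G : group) (p q : G) : gmul G (ginv G p) q = gone G <-> p = q.
Proof.
  split.
  - intros H. rewrite <- (gmul1_r G p). rewrite <- H. rewrite gmulA, gmulV_r, gmul1. auto.
  - intros ->. apply gmulV.
Qed.

Ltac rel_ext := apply functional_extensionality; intro; apply functional_extensionality; intro;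
  apply propositional_extensionality; split.

Lemma mcls_eq {V} (E : V -> V -> Prop) u v : mcls E u = mcls E v <-> meq E u v.
Proof.
  split.
  - intros H. assert (H1 := f_equal (fun f => f v) H). simpl in H1. unfold mcls in H1.
    rewrite H1. apply meq_refl.
  - intros H. unfold mcls. apply functional_extensionality; intro w.
    apply propositional_extensionality. split; intros.
    + eapply meq_trans. apply meq_sym, H. auto.
    + eapply meq_trans. apply H. auto.
Qed.

Definition Rr {V} (E : V -> V -> Prop) (a b : list V) : prel V :=
  fun x y => exists u, x = mcls E (u ++ a) /\ y = mcls E (u ++ b).

Lemma Rr_pair {V} (E : V -> V -> Prop) a b : Rr E a b (mcls E a) (mcls E b).
Proof. exists []. auto. Qed.
Lemma Rr_ne {V} (E : V -> V -> Prop) a b : Rr E a b <> @pempty V.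
Proof. intros H. assert (H1 := Rr_pair E a b). rewrite H in H1. exact H1. Qed.

Lemma Rr_eq {V} (E : V -> V -> Prop) a b a' b' : meq E a a' -> meq E b b' -> Rr E a b = Rr E a' b'.
Proof.
  intros Ha Hb. rel_ext; intros [u [-> ->]]; exists u; split; apply mcls_eq;
    apply meq_app_l; auto using meq_sym.
Qed.

Lemma Rr_sub {V} (E : V -> V -> Prop) a b c d :
  (forall x y, Rr E a b x y -> Rr E c d x y) <-> exists w, meq E a (w ++ c) /\ meq E b (w ++ d).
Proof.
  split.
  - intros H. destruct (H _ _ (Rr_pair E a b)) as [w [H1 H2]]. exists w.
    split; apply mcls_eq; auto.
  - intros [w [H1 H2]] x y [u [-> ->]]. exists (u ++ w). rewrite <- !app_assoc.
    split; apply mcls_eq; apply meq_app_l; auto.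
Qed.

Lemma pempty_comp_l {V} (f : prel V) : pcomp (@pempty V) f = @pempty V.
Proof. rel_ext; [intros [y [[] _]] | intros []]. Qed.
Lemma pempty_comp_r {V} (f : prel V) : pcomp f (@pempty V) = @pempty V.
Proof. rel_ext; [intros [y [_ []]] | intros []]. Qed.

Lemma Rr_comp {V} (E : V -> V -> Prop) (HG : is_graph E) a b c d b' c' :
  meq E (b' ++ b) (c' ++ c) ->
  (forall u u', meq E (u ++ b) (u' ++ c) -> exists w, meq E u (w ++ b') /\ meq E u' (w ++ c')) ->
  pcomp (Rr E a b) (Rr E c d) = Rr E (b' ++ a) (c' ++ d).
Proof.
  intros H1 H2. rel_ext.
  - intros [y [[u [-> ->]] [u' [Hy ->]]]]. apply mcls_eq in Hy.
    destruct (H2 u u' Hy) as [w [Hw1 Hw2]]. exists w. rewrite !app_assoc.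
    split; apply mcls_eq; apply meq_app_r; auto.
  - intros [w [-> ->]]. exists (mcls E ((w ++ b') ++ b)). split.
    + exists (w ++ b'). rewrite app_assoc. auto.
    + exists (w ++ c'). rewrite app_assoc. split; auto. apply mcls_eq.
      rewrite <- !app_assoc. apply meq_app_l. auto.
Qed.

Lemma Rr_comp_empty {V} (E : V -> V -> Prop) a b c d :
  ~ (exists u u', meq E (u ++ b) (u' ++ c)) -> pcomp (Rr E a b) (Rr E c d) = @pempty V.
Proof.
  intros H. rel_ext; [|intros []].
  intros [y [[u [-> ->]] [u' [Hy ->]]]]. apply H. exists u, u'. apply mcls_eq; auto.
Qed.

Lemma idM_Rr {V} (E : V -> V -> Prop) : idM E = Rr E [] [].
Proof.
  rel_ext.
  - intros [-> [u ->]]. exists u. rewrite app_nil_r. auto.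
  - intros [u [-> ->]]. split; auto. exists (u ++ []). auto.
Qed.
Lemma rho_Rr {V} (E : V -> V -> Prop) v : rho E v = Rr E [] v.
Proof.
  rel_ext.
  - intros [u [-> ->]]. exists u. rewrite app_nil_r. auto.
  - intros [u [-> ->]]. exists u. rewrite app_nil_r. auto.
Qed.
Lemma pinv_Rr {V} (E : V -> V -> Prop) a b : pinv (Rr E a b) = Rr E b a.
Proof. unfold pinv. rel_ext; intros [u [H1 H2]]; exists u; auto. Qed.
Lemma pinv_pempty {V} : pinv (@pempty V) = @pempty V.
Proof. reflexivity. Qed.

Lemma IH_form {V} (E : V -> V -> Prop) (HG : is_graph E) f :
  IH E f -> f = @pempty V \/ exists a b, f = Rr E a b.
Proof.
  induction 1.
  - right. exists [], []. apply idM_Rr.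
  - right. exists [], v. apply rho_Rr.
  - destruct IHIH1 as [->|(a & b & ->)]. left; apply pempty_comp_l.
    destruct IHIH2 as [->|(c & d & ->)]. left; apply pempty_comp_r.
    destruct (classic (exists u u', meq E (u ++ b) (u' ++ c))) as [[u [u' Hu]]|Hn].
    + destruct (lcm_ex E HG b c u u' Hu) as (b' & c' & H1 & H2).
      right. exists (b' ++ a), (c' ++ d). apply Rr_comp; auto.
    + left. apply Rr_comp_empty; auto.
  - destruct IHIH as [->|(a & b & ->)]. left; reflexivity.
    right. exists b, a. apply pinv_Rr.
Qed.

Lemma Rr_IH {V} (E : V -> V -> Prop) a b : IH E (Rr E a b).
Proof.
  replace (Rr E a b) with (pcomp (pinv (rho E a)) (rho E b)).
  - apply IH_comp. apply IH_inv, IH_rho. apply IH_rho.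
  - unfold pinv. rel_ext.
    + intros [y [[u [-> ->]] [u' [Hy ->]]]]. exists u. split; auto.
      apply mcls_eq in Hy. apply mcls_eq. apply meq_app_r. apply meq_sym; auto.
    + intros [u [-> ->]]. exists (mcls E u). split; exists u; auto.
Qed.

Lemma P0_form {V} (E : V -> V -> Prop) (HG : is_graph E) f :
  P0 E f -> f = @pempty V \/ exists a b, f = Rr E a b.
Proof. intros [H|H]; auto. apply IH_form; auto. Qed.

Lemma Rr_idem_iff {V} (E : V -> V -> Prop) (HG : is_graph E) a b :
  pcomp (Rr E a b) (Rr E a b) = Rr E a b <-> meq E a b.
Proof.
  split.
  - intros H. assert (H1 := Rr_pair E a b). rewrite <- H in H1.
    destruct H1 as [y [[u [Hu ->]] [u' [Hy Hb]]]].
    apply mcls_eq in Hu. assert (Hl := meq_length E _ _ Hu). rewrite length_app in Hl.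
    destruct u; [|simpl in Hl; lia]. simpl in *.
    apply mcls_eq in Hy. apply mcls_eq in Hb.
    apply (cancel_l E HG u'). eapply meq_trans. apply meq_sym, Hy. exact Hb.
  - intros Hab. rewrite (Rr_eq E a b a a (meq_refl E a) (meq_sym E _ _ Hab)).
    rel_ext.
    + intros [y [[u [-> ->]] [u' [Hy ->]]]]. exists u. split; auto.
    + intros [u [-> ->]]. exists (mcls E (u ++ a)). split; exists u; auto.
Qed.

Lemma idem_sub {V} (E : V -> V -> Prop) (HG : is_graph E) e :
  P_idem E e -> forall x y, e x y -> x = y.
Proof.
  intros [HP He]. destruct (P0_form E HG e HP) as [->|(a & b & ->)].
  - intros x y [].
  - apply Rr_idem_iff in He; auto. intros x y [u [-> ->]]. apply mcls_eq. apply meq_app_l; auto.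
Qed.

Lemma le_sub {V} (E : V -> V -> Prop) (HG : is_graph E) x y :
  P_le E x y -> forall s t, x s t -> y s t.
Proof.
  intros [e [He ->]] s t [s' [H1 H2]]. apply (idem_sub E HG e He) in H1. subst; auto.
Qed.

Lemma sub_le {V} (E : V -> V -> Prop) (HG : is_graph E) a b c d :
  (forall x y, Rr E a b x y -> Rr E c d x y) -> P_le E (Rr E a b) (Rr E c d).
Proof.
  intros H. apply Rr_sub in H. destruct H as [w [H1 H2]].
  exists (Rr E a a). split.
  - split. left. apply Rr_IH. apply Rr_idem_iff; auto. apply meq_refl.
  - rewrite (Rr_comp E HG a a c d [] w); simpl; auto.
    + apply Rr_eq; auto using meq_refl, meq_sym.
    + intros u u' Hu. exists u. rewrite app_nil_r. split. apply meq_refl.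
      apply (cancel_r E HG c). eapply meq_trans. apply meq_sym, Hu.
      rewrite <- app_assoc. apply meq_app_l. auto.
Qed.

Lemma P_Fstar_holds {V} (E : V -> V -> Prop) (HG : is_graph E) : P_Fstar E.
Proof.
  intros a Ha Hne. destruct (P0_form E HG a Ha) as [->|(p & q & ->)]. congruence.
  destruct (gcd_pre E HG p q) as (g & [c Hc] & [d Hd] & Hg).
  assert (Hpm : P_le E (Rr E p q) (Rr E c d)).
  { apply sub_le; auto. apply Rr_sub. exists g. auto. }
  exists (Rr E c d). split.
  - split; auto. split. left; apply Rr_IH.
    intros b Hb Hle. assert (Hs := le_sub E HG _ _ Hle).
    destruct (P0_form E HG b Hb) as [->|(c' & d' & ->)].
    + exfalso. apply (Hs _ _ (Rr_pair E c d)).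
    + apply Rr_sub in Hs. destruct Hs as [w [H1 H2]].
      assert (Hpre : pre E (g ++ w) g).
      { apply Hg.
        - exists c'. rewrite <- app_assoc. eapply meq_trans. exact Hc. apply meq_app_l. auto.
        - exists d'. rewrite <- app_assoc. eapply meq_trans. exact Hd. apply meq_app_l. auto. }
      destruct Hpre as [e He]. apply meq_length in He. rewrite !length_app in He.
      destruct w; [|simpl in He; lia]. simpl in *.
      apply Rr_eq; apply meq_sym; auto.
  - intros m' [[Hm'0 Hmax] Hle]. assert (Hs := le_sub E HG _ _ Hle).
    destruct (P0_form E HG m' Hm'0) as [->|(c' & d' & ->)].
    + exfalso. apply (Hs _ _ (Rr_pair E p q)).
    + apply Rr_sub in Hs. destruct Hs as [w [H1 H2]].
      destruct (Hg w (ex_intro _ c' H1) (ex_intro _ d' H2)) as [e He].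
      apply Hmax. left; apply Rr_IH.
      apply sub_le; auto. apply Rr_sub. exists e. split.
      * apply (cancel_l E HG w). eapply meq_trans. apply meq_sym, H1. eapply meq_trans. exact Hc.
        rewrite app_assoc. apply meq_app_r. auto.
      * apply (cancel_l E HG w). eapply meq_trans. apply meq_sym, H2. eapply meq_trans. exact Hd.
        rewrite app_assoc. apply meq_app_r. auto.
Qed.

Definition hc {V} (E : V -> V -> Prop) (x : elt V) : gcar (SG V) :=
  match excluded_middle_informative (exists w, x = mcls E w) with
  | left H => hw E (proj1_sig (constructive_indefinite_description _ H))
  | right _ => sone
  end.

Lemma hc_mcls {V} (E : V -> V -> Prop) (HG : is_graph E) w : hc E (mcls E w) = hw E w.
Proof.
  unfold hc. destruct (excluded_middle_informative _) as [H|H].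
  - destruct (constructive_indefinite_description _ H) as [w' Hw']. simpl.
    apply hw_meq; auto. apply mcls_eq. auto.
  - exfalso. apply H. eauto.
Qed.

Definition theta {V} (E : V -> V -> Prop) (f : prel V) : option (SG V) :=
  match excluded_middle_informative (exists x y, f x y) with
  | left H => let (x, H') := constructive_indefinite_description _ H in
              let (y, _) := constructive_indefinite_description _ H' in
              Some (gmul (SG V) (ginv (SG V) (hc E x)) (hc E y))
  | right _ => None
  end.

Lemma pair_val {V} (E : V -> V -> Prop) (HG : is_graph E) a b x y :
  Rr E a b x y ->
  gmul (SG V) (ginv (SG V) (hc E x)) (hc E y) = gmul (SG V) (ginv (SG V) (hw E a)) (hw E b).
Proof.
  intros [u [-> ->]]. rewrite !hc_mcls, !hw_app by auto. apply (g_pair (SG V)).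
Qed.

Lemma theta_Rr {V} (E : V -> V -> Prop) (HG : is_graph E) a b :
  theta E (Rr E a b) = Some (gmul (SG V) (ginv (SG V) (hw E a)) (hw E b)).
Proof.
  unfold theta. destruct (excluded_middle_informative _) as [H|H].
  - destruct (constructive_indefinite_description _ H) as [x H'].
    destruct (constructive_indefinite_description _ H') as [y Hy].
    f_equal. apply pair_val; auto.
  - exfalso. apply H. exists (mcls E a), (mcls E b). apply Rr_pair.
Qed.

Lemma theta_empty {V} (E : V -> V -> Prop) : theta E (@pempty V) = None.
Proof.
  unfold theta. destruct (excluded_middle_informative _) as [H|H]; auto.
  exfalso. destruct H as [x [y []]].
Qed.

Lemma nonempty_pair {V} (f : prel V) : f <> @pempty V -> exists x y, f x y.
Proof.
  intros H. apply NNPP. intros Hn. apply H. rel_ext; [|intros []].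
  intros Hf. apply Hn. eauto.
Qed.

Lemma Some_inj {A} (x y : A) : Some x = Some y -> x = y.
Proof. intros H; injection H; auto. Qed.

Lemma SEU {V} (E : V -> V -> Prop) (HG : is_graph E) : P_strongly_Estar_unitary E.
Proof.
  exists (SG V), (theta E). split; [|split].
  - intros a Ha. destruct (P0_form E HG a Ha) as [->|(p & q & ->)].
    + split; auto. intros _. apply theta_empty.
    + rewrite theta_Rr by auto. split; intros H. discriminate. exfalso; eapply Rr_ne; eauto.
  - intros a Ha. destruct (P0_form E HG a Ha) as [->|(p & q & ->)].
    + rewrite theta_empty. split; intros H. discriminate. tauto.
    + rewrite theta_Rr by auto. split.
      * intros H. apply Some_inj in H. apply (g_one (SG V) (hw E p) (hw E q)) in H. apply hw_inj in H; auto.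
        split. apply Rr_ne. split; auto. apply Rr_idem_iff; auto.
      * intros [_ [_ H]]. apply Rr_idem_iff in H; auto. f_equal. apply (g_one (SG V) (hw E p) (hw E q)).
        apply hw_meq; auto.
  - intros a b Ha Hb Hne.
    destruct (P0_form E HG a Ha) as [->|(p & q & ->)].
    { rewrite pempty_comp_l in Hne. congruence. }
    destruct (P0_form E HG b Hb) as [->|(r & s & ->)].
    { rewrite pempty_comp_r in Hne. congruence. }
    assert (Hc : IH E (pcomp (Rr E p q) (Rr E r s))) by (apply IH_comp; apply Rr_IH).
    destruct (IH_form E HG _ Hc) as [H|(P & Q & HPQ)]. congruence.
    rewrite !theta_Rr by auto. rewrite HPQ, theta_Rr by auto. cbv beta iota delta [omul]. f_equal.
    destruct (nonempty_pair _ Hne) as (x & z & y & H1 & H2).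
    assert (Hxz : pcomp (Rr E p q) (Rr E r s) x z) by (exists y; auto).
    rewrite HPQ in Hxz.
    rewrite <- (pair_val E HG P Q x z Hxz), <- (pair_val E HG p q x y H1), <- (pair_val E HG r s y z H2).
    apply (g_mid (SG V)).
Qed.

Theorem corollary4p6 (V : Type) (E : V -> V -> Prop) (HG : is_graph E) :
  P_strongly_Fstar E.
Proof. split. apply P_Fstar_holds; auto. apply SEU; auto. Qed.
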